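(* Let $X \subset \mathbb{R}^{2n}$ be a symplectically self-polar convex body with $C^1$-smooth boundary, and let $T$ be the symplectic outer billiard map of $X$. Then for every $x\in\partial X$ the four points $$z_1=x+f(x),\quad z_2=-x+f(x),\quad z_3=-x-f(x),\quad z_4=x-f(x)$$ are the vertices of a parallelogram of symplectic area $4$, and they form a centrally symmetric closed orbit of $T$: $Tz_i=z_{i+1}$ for $i=1,\dots,4$, with $z_5=z_1$.
   Context: $\mathbb{R}^{2n}\cong\mathbb{C}^n$, $J$ is multiplication by $\sqrt{-1}$, $\omega(u,v)=\langle Ju,v\rangle$. For a convex body $X$ with origin in its interior, $X^\omega=\{y: \omega(x,y)\le 1\ \forall x\in X\}$; $X$ is symplectically self-polar if $X=X^\omega$ (such $X$ is centrally symmetric and, with $C^1$ boundary, strictly convex). For $C^1$ boundary, $f\colon\partial X\to\partial X^\omega$ assigns to $x$ the unique $f(x)\in X^\omega$ with $\omega(x,f(x))=1$. The characteristic line of $\partial X$ at $x$ is $\ker(\omega|_{T_x\partial X})$, spanned by $Jn(x)$ where $n(x)$ is the outer unit normal. Symplectic outer billiard map: for a strictly convex body $X$ with $C^1$ boundary and $z\in\mathbb{R}^{2n}\setminus X$, there is a unique $x\in\partial X$ such that the line through $z$ and $x$ is the characteristic line of $\partial X$ at $x$ and $\omega(x,x-z)>0$; then $T(z)=2x-z$. $T$ is a bijection of $\mathbb{R}^{2n}\setminus X$. *)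

(* Defs.v *)
(* R^{2n} = 'rV[R]_(n + n),
   a vector u is (p, q) with p = lsubmx u, q = rsubmx u, identified with
   p + i q in C^n; J (multiplication by i) maps (p, q) to (-q, p). *)
From HB Require Import structures.
From mathcomp Require Import all_boot all_order all_algebra.
From mathcomp Require Import all_classical all_reals all_analysis.
Set Implicit Arguments. Unset Strict Implicit. Unset Printing Implicit Defensive.
Import Order.TTheory GRing.Theory Num.Theory.
Import numFieldNormedType.Exports.
Local Open Scope classical_set_scope.
Local Open Scope ring_scope.

Section Symp.
Variables (R : realType) (n : nat).
Notation V := 'rV[R]_(n + n).

Definition dotp (u v : V) : R := \sum_(i < n + n) u ord0 i * v ord0 i.

Definition Jmap (u : V) : V := row_mx (- rsubmx u) (lsubmx u).

Definition somega (u v : V) : R := dotp (Jmap u) v.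

Definition convex_body0 (X : set V) : Prop :=
  compact X /\
  (forall x y (t : R), X x -> X y -> 0 <= t <= 1 -> X (t *: x + (1 - t) *: y)) /\
  interior X 0.

Definition bdry (X : set V) : set V := closure X `\` interior X.

Definition spolar (X : set V) : set V :=
  [set y | forall x, X x -> somega x y <= 1].

Definition symp_self_polar (X : set V) : Prop := X = spolar X.

Definition C1_boundary (X : set V) : Prop :=
  forall x, bdry X x ->
  exists (U : set V) (phi : V -> R),
    [/\ open U /\ U x,
        (forall y, U y -> differentiable phi y),
        (forall v : V, {within U, continuous (fun y => 'D_v phi y)}),
        (exists v : V, 'D_v phi x != 0) &
        (forall y, U y -> (X y <-> phi y <= 0))].

Definition fpolar (X : set V) (x : V) : V :=
  xget 0 [set y | spolar X y /\ somega x y = 1].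

Definition outer_normal (X : set V) (x u : V) : Prop :=
  u != 0 /\ forall y, X y -> dotp u (y - x) <= 0.

Definition char_line (X : set V) (x : V) : set V :=
  [set v | exists u t, outer_normal X x u /\ v = t *: Jmap u].

Definition billiard_point (X : set V) (z x : V) : Prop :=
  [/\ bdry X x, char_line X x (z - x) & somega x (x - z) > 0].

Definition Tmap (X : set V) (z : V) : V :=
  2%:R *: xget 0 (billiard_point X z) - z.

End Symp.

(* Main.v *)
Require Import Defs.
From HB Require Import structures.
From mathcomp Require Import all_boot all_order all_algebra.
From mathcomp Require Import all_classical all_reals all_analysis.
From mathcomp Require Import ring lra.
Import Order.TTheory GRing.Theory Num.Theory.
Import numFieldNormedType.Exports.
Local Open Scope classical_set_scope.
Local Open Scope ring_scope.
Set Implicit Arguments. Unset Strict Implicit.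

Section Alg.
Variables (R : realType) (n : nat).
Notation V := 'rV[R]_(n + n).
Notation l u i := (u ord0 (lshift n i)).
Notation r u i := (u ord0 (rshift n i)).

Lemma dotpE (u v : V) : dotp u v = \sum_(i < n) (l u i * l v i + r u i * r v i).
Proof. by rewrite /dotp big_split_ord big_split. Qed.

Lemma somegaE (u v : V) : somega u v = \sum_(i < n) (l u i * r v i - r u i * l v i).
Proof.
rewrite /somega dotpE; apply: eq_bigr => i _.
rewrite /Jmap !mxE (unsplitK (inl i)) (unsplitK (inr i)) /= !mxE; ring.
Qed.

Ltac bil := rewrite ?somegaE ?dotpE ?mulr_sumr -?big_split -?sumrN /=;
  apply: eq_bigr => i _; rewrite ?mxE; ring.

Lemma somegaDl (u v w : V) : somega (u + v) w = somega u w + somega v w. Proof. bil. Qed.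
Lemma somegaDr (u v w : V) : somega w (u + v) = somega w u + somega w v. Proof. bil. Qed.
Lemma somegaNl (u w : V) : somega (- u) w = - somega u w. Proof. bil. Qed.
Lemma somegaNr (u w : V) : somega w (- u) = - somega w u. Proof. bil. Qed.
Lemma somegaZl a (u w : V) : somega (a *: u) w = a * somega u w. Proof. bil. Qed.
Lemma somegaZr a (u w : V) : somega w (a *: u) = a * somega w u. Proof. bil. Qed.
Lemma somegaC (u w : V) : somega w u = - somega u w. Proof. bil. Qed.
Lemma somega_ww (w : V) : somega w w = 0. Proof. rewrite somegaE big1 // => i _; ring. Qed.
Lemma dotpC (u w : V) : dotp w u = dotp u w. Proof. bil. Qed.
Lemma dotpDr (u v w : V) : dotp w (u + v) = dotp w u + dotp w v. Proof. bil. Qed.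
Lemma dotpNr (u w : V) : dotp w (- u) = - dotp w u. Proof. bil. Qed.
Lemma dotpZr a (u w : V) : dotp w (a *: u) = a * dotp w u. Proof. bil. Qed.
Lemma dotpBr (u v w : V) : dotp w (u - v) = dotp w u - dotp w v.
Proof. by rewrite dotpDr dotpNr. Qed.

Lemma JmapE (u : V) i : (Jmap u) ord0 (lshift n i) = - r u i /\ (Jmap u) ord0 (rshift n i) = l u i.
Proof. by rewrite /Jmap !mxE (unsplitK (inl i)) (unsplitK (inr i)) /= !mxE. Qed.

Lemma somega_dotp (w q : V) : somega w q = - dotp w (Jmap q).
Proof. rewrite somegaE dotpE -sumrN; apply: eq_bigr => i _.
have [-> ->] := JmapE q i; ring. Qed.

Lemma dotpJJ (u v : V) : dotp (Jmap u) (Jmap v) = dotp u v.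
Proof. rewrite !dotpE; apply: eq_bigr => i _.
have [-> ->] := JmapE u i; have [-> ->] := JmapE v i; ring. Qed.

Lemma JJ (u : V) : Jmap (Jmap u) = - u.
Proof. by rewrite /Jmap row_mxKl row_mxKr -opp_row_mx hsubmxK. Qed.

Lemma dotp_self_ge0 (u : V) : 0 <= dotp u u.
Proof. by rewrite /dotp sumr_ge0 // => i _; rewrite -expr2 sqr_ge0. Qed.

Lemma dotp_self0 (u : V) : dotp u u = 0 -> u = 0.
Proof.
move=> h; apply/rowP => i; rewrite mxE.
rewrite /dotp in h.
apply/eqP; rewrite -sqrf_eq0 expr2; apply/eqP.
apply: (psumr_eq0P _ h) => // j _; by rewrite -expr2 sqr_ge0.
Qed.

Lemma dotp_ext (a b : V) : (forall v, dotp a v = dotp b v) -> a = b.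
Proof.
move=> h; apply/eqP; rewrite -subr_eq0; apply/eqP/dotp_self0.
rewrite dotpBr [dotp (a - b) a]dotpC [dotp (a - b) b]dotpC !dotpBr !h; ring.
Qed.

Lemma dotp_gt0 (u : V) : u != 0 -> 0 < dotp u u.
Proof. move=> u0; rewrite lt_neqAle dotp_self_ge0 andbT eq_sym.
by apply/eqP => /dotp_self0 /eqP; rewrite (negbTE u0). Qed.

Lemma dotpNl (u w : V) : dotp (- u) w = - dotp u w. Proof. bil. Qed.
Lemma dotp00 : dotp (0 : V) 0 = 0. Proof. by rewrite dotpE big1 // => i _; rewrite !mxE mul0r addr0. Qed.
Lemma Jmap0 : Jmap (0 : V) = 0.
Proof. by apply: dotp_self0; rewrite dotpJJ dotp00. Qed.
Lemma somegax0 (w : V) : somega w 0 = 0.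
Proof. by rewrite -(scale0r 0) somegaZr mul0r. Qed.
Lemma somega_sum0 (z a b : V) : somega (z - a) (b - a) + somega (z - b) (a - b) = 0.
Proof. rewrite !somegaE -big_split big1 // => i _ /=; rewrite !mxE; ring. Qed.

End Alg.

Lemma dnbhs_right (R : realType) (P : R -> Prop) :
  (\forall h \near 0^', P h) -> \forall h \near 0^'+, P h.
Proof.
rewrite !near_withinE; apply: filterS => h Hh h0; apply: Hh.
by rewrite /= gt_eqF.
Qed.

Lemma lim_neg (R : realType) (g : R -> R) l : g h @[h --> 0^'] --> l -> l < 0 ->
   \forall h \near 0^'+, g h < 0.
Proof.
move=> cg l0; apply: dnbhs_right.
move/cvgrPdist_lt: cg => /(_ (- l)); rewrite oppr_gt0 => /(_ l0).
apply: filterS => h; rewrite ltr_norml; lra.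
Qed.

Lemma line_near (R : realType) n (p v : 'rV[R]_n) (U : set 'rV[R]_n) :
  nbhs p U -> \forall t \near (0:R)^'+, U (t *: v + p).
Proof.
move=> hU.
have cv : (fun t : R => t *: v + p) @ (0:R)^'+ --> p.
  apply: cvg_at_right_filter.
  have : (fun t : R => t *: v + p) @ (0:R) --> 0 *: v + p.
    apply: cvgD; last exact: cvg_cst.
    apply: cvgZr_tmp; exact: cvg_id.
  by rewrite scale0r add0r.
exact: cv.
Qed.
Arguments line_near {R n} p v {U}.
Arguments lim_neg {R g l}.
Arguments dnbhs_right {R P}.

Lemma rand (R : realType) (P Q : R -> Prop) : (\forall h \near 0^'+, P h) ->
  (\forall h \near 0^'+, Q h) -> \forall h \near 0^'+, P h /\ Q h.
Proof. move=> hP hQ; have F := at_right_proper_filter (0:R). exact: (@filterI _ _ F _ _ hP hQ). Qed.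
Lemma rex (R : realType) (P : R -> Prop) : (\forall h \near 0^'+, P h) -> exists h, P h.
Proof. move=> hP; have F := at_right_proper_filter (0:R). exact: (@filter_ex _ _ F _ hP). Qed.
Arguments rand {R P Q}. Arguments rex {R P}.

Section Geo.
Variables (R : realType) (n : nat) (X : set 'rV[R]_(n + n)).
Hypotheses (hX : convex_body0 X) (hsp : symp_self_polar X) (hC1 : C1_boundary X).
Notation V := 'rV[R]_(n + n).

Lemma Xclosed : closed X.
Proof. case: hX => cX _; apply: compact_closed => //; exact: norm_hausdorff. Qed.

Lemma bdryX x : bdry X x -> X x.
Proof. by case=> + _; rewrite -(closure_id X).1 //; exact: Xclosed. Qed.

Lemma sp z w : X z -> X w -> somega w z <= 1.
Proof. by move=> Xz Xw; move: Xz; rewrite {1}hsp => /(_ w Xw). Qed.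

Lemma symX z : X z -> X (- z).
Proof.
move=> Xz; rewrite hsp => w Xw; rewrite somegaNr -somegaC; exact: sp.
Qed.

Lemma int0 (v : V) : exists2 d : R, 0 < d & X (d *: v).
Proof.
case: hX => _ [_ i0].
have := line_near 0 v i0; move=> H.
have [d [Xd d0]] := rex (rand H (nbhs_right_gt 0)).
by exists d => //; rewrite addr0 in Xd.
Qed.

Lemma normal_pos y u : outer_normal X y u -> 0 < dotp u y.
Proof.
case=> u0 hu; have [d d0 Xd] := int0 u.
have := hu _ Xd; rewrite dotpBr dotpZr => h.
have := dotp_gt0 u0; nra.
Qed.

Lemma supp_bdry p q : X p -> (forall w, X w -> somega w q <= 1) -> somega p q = 1 ->
  bdry X p.
Proof.
move=> Xp hq pq; split; first exact: subset_closure.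
move=> ip.
have q0 : q != 0 by apply/eqP => q0; move: pq; rewrite q0 somegax0 => /eqP; rewrite eq_sym oner_eq0.
have [t [Xt t0]] := rex (rand (line_near p (- Jmap q) ip) (nbhs_right_gt 0)).
have := hq _ Xt; rewrite somegaDl pq somegaZl somega_dotp dotpNl opprK dotpJJ.
have := dotp_gt0 q0; nra.
Qed.

Lemma normal_repr x : bdry X x -> exists D : V -> R,
  [/\ (exists v, D v != 0), (forall u v, D (u + v) = D u + D v),
      (forall a v, D (a *: v) = a * D v),
      (forall y, X y -> D (y - x) <= 0) &
      (forall a, (forall y, X y -> dotp a (y - x) <= 0) ->
          exists al, forall v, dotp a v = al * D v)].
Proof.
move=> bx; have Xx := bdryX bx.
have Fr : ProperFilter ((0:R)^'+) by exact: at_right_proper_filter.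
have Fr' : Filter ((0:R)^'+) by exact: at_right_proper_filter.
have [U [phi [[oU Ux] dphi _ [v0 hv0] hUX]]] := hC1 bx.
have nU : nbhs x U by apply: open_nbhs_nbhs.
have dx := dphi x Ux.
pose D := fun v => 'd phi x v.
have DE v : 'D_v phi x = D v by rewrite deriveE.
have DD u v : D (u + v) = D u + D v by rewrite /D linearD.
have DZ (a : R) v : D (a *: v) = a * D v by rewrite /D linearZ.
have phix : phi x = 0.
  apply/eqP; rewrite eq_le (hUX x Ux).1 //=; rewrite leNgt; apply/negP => px.
  case: bx => _; apply.
  have := differentiable_continuous dx => /cvgr_lt /(_ _ px) H.
  by apply: filterS (filterI H nU) => y [py Uy]; apply/(hUX y Uy); apply/ltW.
have cvD v : (fun h : R => h^-1 *: ((phi \o shift x) (h *: v) - phi x)) @ 0^' --> D v.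
  rewrite -DE; exact: (diff_derivable dx).
have negD v : D v < 0 -> \forall h \near (0:R)^'+, phi (h *: v + x) < 0.
  move=> Dv; apply: filterS (rand (lim_neg (cvD v) Dv) (nbhs_right_gt 0)).
  move=> h [] /=; rewrite phix subr0 => + h0.
  by rewrite pmulr_rlt0 // invr_gt0.
have posD v : 0 < D v -> \forall h \near (0:R)^'+, 0 < phi (h *: v + x).
  move=> Dv.
  have cN : (fun h : R => - (h^-1 *: ((phi \o shift x) (h *: v) - phi x))) @ 0^' --> - D v.
    exact: cvgN.
  apply: filterS (rand (lim_neg cN _) (nbhs_right_gt 0)); last by rewrite oppr_lt0.
  move=> h [] /=; rewrite phix subr0 oppr_lt0 => + h0.
  by rewrite pmulr_rgt0 // invr_gt0.
have Dle y : X y -> D (y - x) <= 0.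
  move=> Xy; rewrite leNgt; apply/negP => /posD H.
  have H2 := rand H (rand (line_near x (y - x) nU)
      (rand (nbhs_right_gt 0) (@nbhs_right_le R 0 1 ltr01))).
  have [h [ph [Uh [h0 h1]]]] := rex H2.
  have : X (h *: (y - x) + x).
    have -> : h *: (y - x) + x = h *: y + (1 - h) *: x.
      by apply/rowP => i; rewrite !mxE; ring.
    by case: hX => _ [hc _]; apply: hc => //; rewrite (ltW h0) h1.
  by move=> /(hUX _ Uh); rewrite leNgt ph.
have Dnorm a : (forall y, X y -> dotp a (y - x) <= 0) -> forall v, D v < 0 -> dotp a v <= 0.
  move=> ha v /negD H.
  have [h [ph [Uh h0]]] := rex (rand H (rand (line_near x v nU) (nbhs_right_gt 0))).
  have Xh : X (h *: v + x) by apply/(hUX _ Uh); apply: ltW.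
  have := ha _ Xh; rewrite addrK dotpZr => hv.
  by move: hv; rewrite pmulr_rle0.
exists D; split => //; first by exists v0; rewrite -DE.
move=> a ha.
have Dv0 : D v0 != 0 by rewrite -DE.
pose e := (- (D v0)^-1) *: v0.
have De : D e = -1 by rewrite DZ mulNr mulVf.
have ae : dotp a e <= 0 by apply: Dnorm => //; rewrite De ltrN10.
exists (- dotp a e) => v.
pose w := v + D v *: e.
have Dw : D w = 0 by rewrite DD DZ De mulrN1 subrr.
have Dn u : D (- u) = - D u by rewrite -scaleN1r DZ mulN1r.
have hw1 eps : 0 < eps -> dotp a w + eps * dotp a e <= 0.
  move=> ep; rewrite -dotpZr -dotpDr; apply: Dnorm => //.
  by rewrite DD Dw add0r DZ De mulrN1 oppr_lt0.
have hw2 eps : 0 < eps -> - dotp a w + eps * dotp a e <= 0.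
  move=> ep; rewrite -dotpNr -dotpZr -dotpDr; apply: Dnorm => //.
  by rewrite DD Dn Dw oppr0 add0r DZ De mulrN1 oppr_lt0.
have aw : dotp a w = 0.
  have key : forall s, (forall eps, 0 < eps -> s + eps * dotp a e <= 0) -> s <= 0.
    move=> s hs; apply/ler_addgt0Pr => eps ep; rewrite add0r.
    have ce : 0 < 1 - dotp a e by lra.
    have := hs (eps / (1 - dotp a e)) (divr_gt0 ep ce).
    have -> : eps = eps / (1 - dotp a e) * (1 - dotp a e) by rewrite divfK // gt_eqF.
    rewrite mulfK ?gt_eqF //.
    have : 0 < eps / (1 - dotp a e) := divr_gt0 ep ce.
    nra.
  apply/eqP; rewrite eq_le key //= -oppr_le0 key //.
have -> : v = w - D v *: e by rewrite /w addrK.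
rewrite dotpBr dotpZr aw DD Dn DZ Dw De; ring.
Qed.


Lemma key2 x a b : bdry X x ->
  (forall w, X w -> somega w a <= 1) -> (forall w, X w -> somega w b <= 1) ->
  somega x a = 1 -> somega x b = 1 -> a = b.
Proof.
move=> bx ha hb xa xb.
have [D [_ _ _ _ rep]] := normal_repr bx.
have nrm c : (forall w, X w -> somega w c <= 1) -> somega x c = 1 ->
    forall y, X y -> dotp (- Jmap c) (y - x) <= 0.
  move=> hc xc y Xy; rewrite dotpNl dotpBr ![dotp (Jmap c) _]dotpC.
  have := hc _ Xy; rewrite !somega_dotp in xc *; lra.
have [al hal] := rep _ (nrm _ ha xa).
have [be hbe] := rep _ (nrm _ hb xb).
have ex c : somega x c = 1 -> dotp (- Jmap c) x = 1.
  by move=> xc; rewrite dotpNl dotpC -somega_dotp.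
have e1 := ex _ xa; have e2 := ex _ xb.
rewrite hal in e1; rewrite hbe in e2.
have Dx : D x != 0 by apply/eqP => Dx; move: e1; rewrite Dx mulr0 => /eqP; rewrite eq_sym oner_eq0.
have albe : al = be by apply: (mulIf Dx); rewrite e1 e2.
have : - Jmap a = - Jmap b by apply: dotp_ext => v; rewrite hal hbe albe.
move/oppr_inj => /(congr1 (@Jmap R n)); rewrite !JJ; exact: oppr_inj.
Qed.

Lemma fpolar_spec x : bdry X x -> spolar X (fpolar X x) /\ somega x (fpolar X x) = 1.
Proof.
move=> bx; rewrite /fpolar; apply: (@xgetPex _ 0 [set y | spolar X y /\ somega x y = 1]).
have [D [[v0 hv0] DD DZ Dle _]] := normal_repr bx.
pose a : V := \row_i D 'e_i.
have D0 : D 0 = 0 by rewrite -(scale0r 0) DZ mul0r.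
have aD v : dotp a v = D v.
  rewrite {2}(row_sum_delta v) (big_morph D DD D0) /dotp.
  by apply: eq_bigr => i _; rewrite mxE DZ mulrC.
have a0 : a != 0 by apply/eqP => a0; move: hv0; rewrite -aD a0 dotpC -(scale0r 0) dotpZr mul0r eqxx.
have na : outer_normal X x a by split => // y Xy; rewrite aD; exact: Dle.
have M0 := normal_pos na.
exists ((dotp a x)^-1 *: Jmap a); split.
  move=> w Xw; rewrite somegaZr somega_dotp JJ dotpNr opprK (dotpC a w).
  rewrite ler_pdivrMl //.
  have := Dle _ Xw; rewrite -aD dotpBr; lra.
by rewrite somegaZr somega_dotp JJ dotpNr opprK (dotpC a x) mulVf // gt_eqF.
Qed.

Lemma BP p q : bdry X p -> X q -> somega p q = 1 -> billiard_point X (p - q) p.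
Proof.
move=> bp Xq pq; split => //.
  exists (Jmap (- q)), (-1); split.
    split.
      apply/eqP => h; have : Jmap (Jmap (- q)) = 0 by rewrite h Jmap0.
      rewrite JJ opprK => q0; move: pq; rewrite q0 somegax0 => /eqP.
      by rewrite eq_sym oner_eq0.
    move=> y Xy.
    have -> : dotp (Jmap (-q)) (y - p) = somega (y - p) q.
      by rewrite dotpC -[LHS]opprK -somega_dotp somegaNr opprK.
    have := sp Xq Xy.
    have -> : somega (y - p) q = somega y q - somega p q by rewrite somegaDl somegaNl.
    rewrite pq; lra.
  by rewrite JJ opprK scaleN1r; apply/rowP => i; rewrite !mxE; ring.
have -> : p - (p - q) = q by apply/rowP => i; rewrite !mxE; ring.
by rewrite pq ltr01.
Qed.

Lemma bp_facts z y : billiard_point X z y -> exists u t,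
  [/\ outer_normal X y u, t < 0 &
    forall w, X w -> somega (z - y) (w - y) = - t * dotp u (w - y)].
Proof.
case=> hby [u [t [nu zy]]] pos; exists u, t.
have eqw w : somega (z - y) (w - y) = - t * dotp u (w - y).
  by rewrite zy somegaZl somega_dotp dotpJJ mulrN mulNr.
split => //.
have := normal_pos nu.
have : somega y (y - z) = - t * dotp u y.
  have -> : y - z = - (z - y) by rewrite opprB.
  by rewrite somegaNr zy somegaZr somega_dotp JJ dotpNr opprK dotpC mulNr.
move=> e1 h2; rewrite e1 in pos; nra.
Qed.

Lemma bp_unique z y1 y2 : billiard_point X z y1 -> billiard_point X z y2 -> y1 = y2.
Proof.
move=> b1 b2.
have [u1 [t1 [n1 t10 e1]]] := bp_facts b1.
have [u2 [t2 [n2 t20 e2]]] := bp_facts b2.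
have X1 : X y1 by case: b1 => /bdryX.
have X2 : X y2 by case: b2 => /bdryX.
have s1 := e1 _ X2; have s2 := e2 _ X1.
have le1 : dotp u1 (y2 - y1) <= 0 by case: n1 => _; apply.
have le2 : dotp u2 (y1 - y2) <= 0 by case: n2 => _; apply.
have := somega_sum0 z y1 y2; rewrite s1 s2 => hs.
have d0 : dotp u1 (y2 - y1) = 0 by nra.
have M0 := normal_pos n1.
set M := dotp u1 y1 in M0.
have My2 : dotp u1 y2 = M by move: d0; rewrite dotpBr /M; lra.
pose q := M^-1 *: Jmap u1.
have qw w : somega w q = M^-1 * dotp u1 w.
  by rewrite somegaZr somega_dotp JJ dotpNr opprK dotpC.
have Xq : X q.
  rewrite hsp => w Xw; rewrite qw ler_pdivrMl // mulr1.
  case: n1 => _ /(_ _ Xw); rewrite dotpBr /M; lra.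
have Xmq := symX Xq.
have m1 : somega (- q) y1 = 1 by rewrite somegaNl somegaC opprK qw mulVf // gt_eqF.
have m2 : somega (- q) y2 = 1 by rewrite somegaNl somegaC opprK qw My2 mulVf // gt_eqF.
have bq : bdry X (- q) by apply: (supp_bdry Xmq) m1 => w Xw; exact: sp.
by apply: (key2 bq) m1 m2 => w Xw; exact: sp.
Qed.

Lemma Tmap_BP p q z : bdry X p -> X q -> somega p q = 1 -> z = p - q ->
  Tmap X z = 2%:R *: p - z.
Proof.
move=> bp Xq pq ->; rewrite /Tmap (xget_unique _ (BP bp Xq pq)) //.
move=> y hy; exact: bp_unique hy (BP bp Xq pq).
Qed.

End Geo.

Unset Implicit Arguments.

Theorem theorem3p1 (R : realType) (n : nat) (X : set 'rV[R]_(n + n))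
  (hX : convex_body0 X) (hsp : symp_self_polar X) (hC1 : C1_boundary X)
  (x : 'rV[R]_(n + n)) (hx : bdry X x) :
  let z1 := x + fpolar X x in
  let z2 := - x + fpolar X x in
  let z3 := - x - fpolar X x in
  let z4 := x - fpolar X x in
  [/\ z2 - z1 = z3 - z4,
      somega (z2 - z1) (z4 - z1) = 4%:R,
      z3 = - z1 /\ z4 = - z2,
      ~ X z1 /\ ~ X z2 /\ ~ X z3 /\ ~ X z4 &
      [/\ Tmap X z1 = z2, Tmap X z2 = z3, Tmap X z3 = z4 & Tmap X z4 = z1]].
Proof.
move=> z1 z2 z3 z4; rewrite /z1 /z2 /z3 /z4.
have [spf wf] := fpolar_spec hX hC1 hx.
set f := fpolar X x in spf wf *.
have Xf : X f by rewrite hsp.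
have Xx := bdryX hX hx.
have Xmx := symX hsp Xx.
have Xmf := symX hsp Xf.
have spX := sp hsp.
have notX g : X (g + f) -> somega x g = 0 -> g = 0.
  move=> Xg xg.
  have e : f = g + f.
    apply: (key2 hX hC1 hx);
      [move=> w Xw; exact: spX | move=> w Xw; exact: spX | exact: wf |
       by rewrite somegaDr xg add0r].
  by rewrite -[g](addrK f) -e subrr.
have x0 : x != 0.
  by apply/eqP => x0; move: wf; rewrite x0 somegaC somegax0 oppr0 => /eqP; rewrite eq_sym oner_eq0.
split.
- by apply/rowP => i; rewrite !mxE; ring.
- have -> : somega (- x + f - (x + f)) (x - f - (x + f)) = 4 * somega x f.
    by rewrite !somegaE mulr_sumr; apply: eq_bigr => i _; rewrite !mxE; ring.
  by rewrite wf mulr1.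
- by split; apply/rowP => i; rewrite !mxE; ring.
- have n1 : ~ X (x + f) by move=> h; move/eqP: x0; apply; apply: (notX x h); rewrite somega_ww.
  have n2 : ~ X (- x + f).
    move=> h; move/eqP: x0; apply; apply/oppr_inj; rewrite oppr0.
    by apply: (notX (- x) h); rewrite somegaNr somega_ww oppr0.
  split => //; split => //; split.
    move=> h; apply: n1; have := symX hsp h.
    by have -> : - (- x - f) = x + f by apply/rowP => i; rewrite !mxE; ring.
  move=> h; apply: n2; have := symX hsp h.
  by have -> : - (x - f) = - x + f by apply/rowP => i; rewrite !mxE; ring.
have sq q : X q -> forall w, X w -> somega w q <= 1 by move=> Xq w Xw; exact: spX.
have bf : bdry X f.
  apply: (supp_bdry Xf (sq _ Xmx)).
  by rewrite somegaNr somegaC opprK.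
have bmx : bdry X (- x).
  apply: (supp_bdry Xmx (sq _ Xmf)).
  by rewrite somegaNr somegaNl opprK.
have bmf : bdry X (- f).
  apply: (supp_bdry Xmf (sq _ Xx)).
  by rewrite somegaNl somegaC opprK.
split.
- rewrite (Tmap_BP hX hsp hC1 bf Xmx); last 2 first.
  + by rewrite somegaNr somegaC opprK.
  + by apply/rowP => i; rewrite !mxE; ring.
  by apply/rowP => i; rewrite !mxE; ring.
- rewrite (Tmap_BP hX hsp hC1 bmx Xmf); last 2 first.
  + by rewrite somegaNr somegaNl opprK.
  + by apply/rowP => i; rewrite !mxE; ring.
  by apply/rowP => i; rewrite !mxE; ring.
- rewrite (Tmap_BP hX hsp hC1 bmf Xx); last 2 first.
  + by rewrite somegaNl somegaC opprK.
  + by apply/rowP => i; rewrite !mxE; ring.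
  by apply/rowP => i; rewrite !mxE; ring.
- rewrite (Tmap_BP hX hsp hC1 hx Xf wf); last first.
  + by apply/rowP => i; rewrite !mxE; ring.
  by apply/rowP => i; rewrite !mxE; ring.
Qed.
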